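(* Let $f\in\mathbb C[U_1,\ldots,U_n]$ have nonzero constant term. Then there exists $m\ge1$ with $\mathcal L(f^m)\ne0$.
   Context: $\mathcal L:\mathbb C[U_1,\ldots,U_n]\to\mathbb C$ is the $\mathbb C$-linear map defined on monomials by $\mathcal L(U_1^{\ell_1}\cdots U_n^{\ell_n})=\ell_1!\cdots\ell_n!$. *)

(* Defs.v *)
From HB Require Import structures.
From mathcomp Require Import all_boot all_order all_algebra.
Set Implicit Arguments. Unset Strict Implicit. Unset Printing Implicit Defensive.
Import Order.TTheory GRing.Theory Num.Theory.
Local Open Scope ring_scope.

Definition mono (n : nat) := (n.-tuple nat)%type.

(* a polynomial is a formal sum  \sum_k c_k U^{e_k}  given as a list of (e_k, c_k) *)
Definition mpoly (R : nzRingType) (n : nat) := seq (mono n * R)%type.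

Definition mono0 (n : nat) : mono n := [tuple 0%N | i < n].
Definition monoM (n : nat) (a b : mono n) : mono n :=
  [tuple (tnth a i + tnth b i)%N | i < n].

Definition mpoly1 (R : nzRingType) (n : nat) : mpoly R n := [:: (mono0 n, 1)].
Definition mpolyM (R : nzRingType) (n : nat) (p q : mpoly R n) : mpoly R n :=
  [seq (monoM s.1 t.1, s.2 * t.2) | s <- p, t <- q].
Definition mpolyX (R : nzRingType) (n : nat) (p : mpoly R n) (m : nat) : mpoly R n :=
  iter m (mpolyM p) (mpoly1 R n).

Definition const_term (R : nzRingType) (n : nat) (p : mpoly R n) : R :=
  \sum_(t <- p | t.1 == mono0 n) t.2.

Definition Lfun (R : nzRingType) (n : nat) (p : mpoly R n) : R :=
  \sum_(t <- p) t.2 * ((\prod_(i < n) (tnth t.1 i)`!)%N)%:R.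

(* Main.v *)
Require Import Defs.
From HB Require Import structures.
From mathcomp Require Import all_boot all_order all_algebra.
From Stdlib Require Import Classical ClassicalEpsilon Lia.
Import Order.TTheory GRing.Theory Num.Theory.
Local Open Scope ring_scope.

Set Implicit Arguments. Unset Strict Implicit. Unset Printing Implicit Defensive.

Lemma asb_ex (P : Prop) : {b : bool | b <-> P}.
Proof.
apply: constructive_indefinite_description.
case: (classic P) => H; [by exists true | by exists false].
Qed.
Definition asb (P : Prop) : bool := proj1_sig (asb_ex P).
Lemma asbP P : reflect P (asb P).
Proof. rewrite /asb; case: (asb_ex P) => b /= H; apply: (iffP idP); by move/H. Qed.

Section Alg.
Variable K : numFieldType.

Definition ints : {pred K} := fun x => asb (exists z : int, x = z%:~R).
Lemma ints_closed : GRing.subring_closed ints.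
Proof.
split.
- by apply/asbP; exists 1; rewrite rmorph1.
- move=> x y /asbP[a ->] /asbP[b ->]; apply/asbP; exists (a - b).
  by rewrite rmorphB.
- move=> x y /asbP[a ->] /asbP[b ->]; apply/asbP; exists (a * b).
  by rewrite rmorphM.
Qed.
HB.instance Definition _ := GRing.isSubringClosed.Build K ints ints_closed.

Definition adj (S : {pred K}) (y : K) : {pred K} :=
  fun x => asb (exists2 q, q \is a polyOver S & x = q.[y]).

Lemma adj_closed (S : subringClosed K) y : GRing.subring_closed (adj S y).
Proof.
split.
- by apply/asbP; exists 1; rewrite ?rpred1 ?hornerC.
- move=> x z /asbP[a Sa ->] /asbP[b Sb ->]; apply/asbP; exists (a - b).
    by rewrite rpredB. by rewrite hornerD hornerN.
- move=> x z /asbP[a Sa ->] /asbP[b Sb ->]; apply/asbP; exists (a * b).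
    by rewrite rpredM. by rewrite hornerM.
Qed.
HB.instance Definition _ (S : subringClosed K) y :=
  GRing.isSubringClosed.Build K (adj S y) (adj_closed S y).

Lemma adj_sub (S : subringClosed K) y x : x \in S -> x \in adj S y.
Proof. by move=> Sx; apply/asbP; exists x%:P; rewrite ?polyOverC ?hornerC. Qed.
Lemma adj_gen (S : subringClosed K) y : y \in adj S y.
Proof. by apply/asbP; exists 'X; rewrite ?polyOverX ?hornerX. Qed.

Definition loc (S : {pred K}) (e : K) : {pred K} :=
  fun x => asb (e \in S -> exists k, x * e ^+ k \in S).

Lemma loc_closed (S : subringClosed K) e : GRing.subring_closed (loc S e).
Proof.
split.
- by apply/asbP => _; exists 0%N; rewrite mulr1 rpred1.
- move=> x z /asbP Hx /asbP Hz; apply/asbP => Se.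
  case: (Hx Se) => a Ha; case: (Hz Se) => b Hb; exists (a + b)%N.
  rewrite mulrBl exprD; apply: rpredB; first by rewrite mulrA rpredM ?rpredX.
  by rewrite [e ^+ a * _]mulrC mulrA rpredM ?rpredX.
- move=> x z /asbP Hx /asbP Hz; apply/asbP => Se.
  case: (Hx Se) => a Ha; case: (Hz Se) => b Hb; exists (a + b)%N.
  by rewrite exprD mulrACA rpredM.
Qed.
HB.instance Definition _ (S : subringClosed K) e :=
  GRing.isSubringClosed.Build K (loc S e) (loc_closed S e).

Lemma loc_sub (S : subringClosed K) e x : x \in S -> x \in loc S e.
Proof. by move=> Sx; apply/asbP => _; exists 0%N; rewrite mulr1. Qed.
Lemma locP (S : subringClosed K) e x : e \in S -> x \in loc S e ->
  exists k, forall j, (k <= j)%N -> x * e ^+ j \in S.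
Proof.
move=> Se /asbP/(_ Se) [k Hk]; exists k => j kj.
by rewrite -(subnK kj) addnC exprD mulrA rpredM ?rpredX.
Qed.

Fixpoint gen (ys : seq K) : {pred K} :=
  if ys is y :: ys' then adj (gen ys') y else ints.

Lemma gen_closed ys : GRing.subring_closed (gen ys).
Proof.
elim: ys => [|y ys IH] /=; first exact: ints_closed.
pose S : subringClosed K := HB.pack (gen ys) (GRing.isSubringClosed.Build K _ IH).
exact: (adj_closed S y).
Qed.
HB.instance Definition _ ys :=
  GRing.isSubringClosed.Build K (gen ys) (gen_closed ys).

Lemma gen_cons y ys x : (x \in gen (y :: ys)) = (x \in adj (gen ys) y).
Proof. by []. Qed.


Section Integral.
Variables (S : subringClosed K) (e : K).
Record subT := SubT {sval : K; _ : sval \in loc S e}.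
HB.instance Definition _ := [isSub for sval].
HB.instance Definition _ := [Choice of subT by <:].
HB.instance Definition _ := [SubChoice_isSubComNzRing of subT by <:].
Definition vv : {rmorphism subT -> K} := GRing.RMorphism.clone _ _ val _.

Lemma int_loc x : x \in loc S e -> integralOver vv x.
Proof.
move=> Lx; have -> : x = vv (insubd (insubd 0 1) x) by rewrite /= insubdK.
exact: integral_id.
Qed.

Lemma integral_loc z : integralOver vv z ->
  exists2 chi : {poly K}, chi \is monic & (chi \is a polyOver (loc S e)) && root chi z.
Proof.
case=> P mP rP; exists (map_poly vv P); first exact: monic_map.
rewrite rP andbT; apply/polyOverP => i; rewrite coef_map /=.
exact: valP.
Qed.
End Integral.

Lemma adj_integral (S : subringClosed K) y h z :
  h \is a polyOver S -> h != 0 -> root h y -> z \in adj S y ->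
  exists2 chi : {poly K}, chi \is monic &
     (chi \is a polyOver (loc S (lead_coef h))) && root chi z.
Proof.
move=> hS hnz hy /asbP[q qS ->].
set e := lead_coef h.
have e0 : e != 0 by rewrite lead_coef_eq0.
have Le : e^-1 \in loc S e.
  by apply/asbP => _; exists 1%N; rewrite expr1 mulVf // rpred1.
apply: integral_loc; apply: integral_horner.
  move=> x /(nthP 0) [i _ <-]; apply: int_loc; apply: loc_sub.
  exact: (polyOverP qS).
apply: (@integral_root_monic _ _ _ _ (e^-1 *: h)).
- by rewrite monicE lead_coefZ mulVf.
- by rewrite /root hornerZ (rootP hy) mulr0.
move=> x /(nthP 0) [i _ <-]; apply: int_loc; rewrite coefZ rpredM //.
by apply: loc_sub; exact: (polyOverP hS).
Qed.


Definition pfree (S : {pred K}) (b : K) :=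
  exists N : nat, forall p, prime p -> (N < p)%N ->
    forall k z, z \in S -> b ^+ k != p%:R * z.

Lemma pfree_ints b : b \in ints -> b != 0 -> pfree ints b.
Proof.
move=> /asbP[z0 ->] nz; exists `|z0|%N => p pp Np k z /asbP[z1 ->].
apply/negP => /eqP E.
have E2 : z0 ^+ k = p%:Z * z1.
  apply/eqP; rewrite -(eqr_int K) rmorphXn rmorphM /= E; by [].
have : (p %| `|z0| ^ k)%N by rewrite -abszX E2 abszM /= dvdn_mulr.
rewrite Euclid_dvdX // => /andP[/dvdn_leq H _].
have : (0 < `|z0|)%N by rewrite absz_gt0; move: nz; rewrite intr_eq0.
by move=> /H; rewrite leqNgt Np.
Qed.

Lemma root_pow (T : subringClosed K) (chi : {poly K}) z x (p : nat) :
  chi \is monic -> chi \is a polyOver T -> root chi z -> x = p%:R * z -> x \in T ->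
  exists2 v, v \in T & x ^+ (size chi).-1 = p%:R * v.
Proof.
move=> mc cT rz xE xT.
have sz : size chi = (size chi).-1.+1 by rewrite prednK // size_poly_gt0 monic_neq0.
set d := (size chi).-1 in sz *.
exists (- \sum_(i < d) chi`_i * p%:R ^+ (d - i).-1 * x ^+ i).
  rewrite rpredN rpred_sum // => i _; rewrite !rpredM ?rpredX ?rpred_nat //.
  exact: (polyOverP cT).
have : p%:R ^+ d * chi.[z] = 0 by rewrite (rootP rz) mulr0.
rewrite horner_coef sz big_ord_recr /= mulrDr.
have -> : chi`_d = 1 by move: mc; rewrite monicE /lead_coef -/d => /eqP.
rewrite mul1r -exprMn -xE mulrN big_distrr /= => /eqP; rewrite addrC addr_eq0 => /eqP ->.
congr (- _); rewrite big_distrr; apply: eq_bigr => i _ /=.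
have hi : (d = (d - i).-1 + 1 + i)%N by rewrite addn1 prednK ?subn_gt0 // subnK // ltnW.
rewrite {1}hi !exprD xE exprMn expr1; set P := p%:R : K.
rewrite -!mulrA mulrCA; congr (P * _).
by rewrite [P ^+ i * _]mulrCA mulrCA.
Qed.

Lemma mono2 (a e : K) i j i' j' :
  (a ^+ i * e ^+ j) * (a ^+ i' * e ^+ j') = a ^+ (i + i') * e ^+ (j + j').
Proof. by rewrite mulrACA -!exprD. Qed.

Lemma badmix (A : subringClosed K) (a0 e w : K) (k0 KK E p : nat) :
  a0 * e ^+ k0 \in A -> e \in A -> w \in A ->
  a0 ^+ KK * e ^+ E = p%:R * w ->
  exists2 w', w' \in A & (a0 * e ^+ k0 * e) ^+ (KK + E) = p%:R * w'.
Proof.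
move=> aA eA wA H.
exists (w * ((a0 * e ^+ k0) ^+ E * e ^+ (k0 * KK + KK))).
  by rewrite !rpredM ?rpredX.
rewrite [RHS]mulrA -H.
have -> : (a0 * e ^+ k0) ^+ E = a0 ^+ E * e ^+ (k0 * E) by rewrite exprMn exprM.
have -> : e ^+ (k0 * KK + KK) = a0 ^+ 0 * e ^+ (k0 * KK + KK) by rewrite expr0 mul1r.
rewrite mono2 mono2 !exprMn -exprM -mulrA -exprD addn0; congr (_ * _ ^+ _).
rewrite -!plusE -!multE; lia.
Qed.


Lemma loc_mono (A B : {pred K}) e x : {subset A <= B} -> e \in A ->
  x \in loc A e -> x \in loc B e.
Proof. by move=> AB eA /asbP/(_ eA)[k Hk]; apply/asbP => _; exists k; apply: AB. Qed.

Lemma gen_pfree ys b : b \in gen ys -> b != 0 -> pfree (gen ys) b.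
Proof.
elim: ys b => [|y ys IH] b; first exact: pfree_ints.
rewrite gen_cons => bB bnz.
set A := gen ys.
case: (classic (exists h, [/\ h \is a polyOver A, h != 0 & root h y]))
   => [[h [hA hnz hy]] | nalg].
- set e := lead_coef h.
  have eA : e \in A by exact: (polyOverP hA).
  have e0 : e != 0 by rewrite lead_coef_eq0.
  have AB : {subset A <= adj A y} by move=> x; exact: adj_sub.
  have eB : e \in adj A y := AB _ eA.
  have [chi mc /andP[cL rb]] := adj_integral hA hnz hy bB.
  have ex : exists j, chi`_j != 0.
    by exists (size chi).-1; rewrite -lead_coefE lead_coef_eq0 monic_neq0.
  case: (ex_minnP ex) => j Hj Hmin.
  set chi' := drop_poly j chi.
  have tk : take_poly j chi = 0.
    apply/polyP => i; rewrite coef_take_poly coef0; case: ifP => // ij.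
    apply/eqP; apply: contraTT ij => nz; rewrite -leqNgt; exact: Hmin.
  have chiE : chi = chi' * 'X^j by rewrite -{1}(poly_take_drop j chi) tk add0r.
  have rb' : chi'.[b] = 0.
    move: rb; rewrite /root chiE hornerM hornerXn mulf_eq0 expf_eq0 (negbTE bnz).
    by rewrite andbF orbF => /eqP.
  have c'L : chi' \is a polyOver (loc A e).
    by apply/polyOverP => i; rewrite coef_drop_poly; exact: (polyOverP cL).
  set a0 := chi'`_0.
  have a0nz : a0 != 0 by rewrite /a0 coef_drop_poly add0n.
  have a0L : a0 \in loc A e := polyOverP c'L 0.
  set w := (drop_poly 1 chi').[b].
  have a0E : a0 = b * (- w).
    have tk1 : take_poly 1 chi' = a0%:P.
      by apply/polyP => -[|i]; rewrite coef_take_poly coefC.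
    have := poly_take_drop 1 chi'; move/(congr1 (fun q => q.[b])).
    rewrite tk1 hornerD hornerC hornerM hornerX rb' -/w => /eqP.
    by rewrite addr_eq0 => /eqP ->; rewrite mulrN mulrC.
  have wL : w \in loc (adj A y) e.
    apply: rpred_horner; last exact: loc_sub.
    apply/polyOverP => i; rewrite coef_drop_poly; apply: loc_mono AB eA _.
    exact: (polyOverP c'L).
  have [k0 Hk0] := locP eA a0L.
  set a := a0 * e ^+ k0.
  have aA : a \in A := Hk0 k0 (leqnn _).
  have cA : a * e \in A by rewrite rpredM.
  have cnz : a * e != 0 by rewrite !mulf_neq0 // expf_neq0.
  have [N HN] := IH _ cA cnz.
  exists N => p pp Np k z zB; apply/negP => /eqP Hbk.
  set u := z * (- w) ^+ k.
  have uL : u \in loc (adj A y) e.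
    by apply: rpredM; [exact: loc_sub | apply: rpredX; rewrite rpredN].

  have au : a0 ^+ k = p%:R * u by rewrite a0E exprMn Hbk mulrA.
  have [M1 HM1] := locP eB uL.
  set M := (k * k0 + M1)%N.
  set x := a0 ^+ k * e ^+ M.
  have xA : x \in A.
    rewrite /x /M exprD mulrA mulnC exprM -exprMn rpredM ?rpredX //.
  have z'B : u * e ^+ M \in adj A y by apply: HM1; rewrite leq_addl.
  have xE : x = p%:R * (u * e ^+ M) by rewrite /x au mulrA.
  have [chi2 mc2 /andP[c2L r2]] := adj_integral hA hnz hy z'B.
  have [v vL Hv] := root_pow mc2 c2L r2 xE (loc_sub _ xA).
  set D := (size chi2).-1 in Hv.
  have [M3 HM3] := locP eA vL.
  have Hbad : a0 ^+ (k * D) * e ^+ (M * D + M3) = p%:R * (v * e ^+ M3).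
    by rewrite mulrA -Hv /x exprMn -!exprM exprD mulrA.
  have [w' w'A Hc] := badmix aA eA (HM3 M3 (leqnn _)) Hbad.
  by move: (HN p pp Np (k * D + (M * D + M3))%N _ w'A); rewrite /a Hc eqxx.
- have tr : forall r, r \is a polyOver A -> r.[y] = 0 -> r = 0.
    move=> r rA ry; case: (eqVneq r 0) => // rnz; case: nalg.
    by exists r; split => //; exact/rootP.
  case/asbP: bB => q qA bE.
  have qnz : q != 0 by apply/eqP => q0; move: bnz; rewrite bE q0 horner0 eqxx.
  have lA : lead_coef q \in A := polyOverP qA _.
  have lnz : lead_coef q != 0 by rewrite lead_coef_eq0.
  have [N HN] := IH _ lA lnz.
  exists N => p pp Np k z zB; apply/negP => /eqP Hbk.
  case/asbP: zB => r rA0 zE.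
  have rA : r \is a polyOver (gen ys) := rA0.
  have E : q ^+ k = p%:R *: r.
    apply/eqP; rewrite -subr_eq0; apply/eqP; apply: tr.
      by rewrite rpredB ?rpredX // polyOverZ ?rpred_nat.
    by rewrite hornerD hornerN hornerZ horner_exp -bE -zE Hbk subrr.
  have := congr1 lead_coef E; rewrite lead_coef_exp lead_coefZ => H.
  by move: (HN p pp Np k _ (polyOverP rA (size r).-1)); rewrite -lead_coefE -H eqxx.
Qed.

End Alg.

Lemma frob2 (T : comNzRingType) (S : subringClosed T) p x y :
  prime p -> x \in S -> y \in S ->
  exists2 w, w \in S & (x + y) ^+ p = x ^+ p + y ^+ p + p%:R * w.
Proof.
move=> pp xS yS.
have [p' pE] : exists p', p = p'.+2 by case: p pp => [|[|p']] //; exists p'.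
exists (\sum_(i < p'.+1) (x ^+ (p - i.+1) * y ^+ i.+1) *+ ('C(p, i.+1) %/ p)).
  by rewrite rpred_sum // => i _; rewrite rpredMn // rpredM ?rpredX.
rewrite exprDn; subst p; rewrite big_ord_recl [X in _ + X = _]big_ord_recr /=.
rewrite /bump !leq0n !add1n bin0 binn subn0 subnn expr0 mulr1 mul1r !mulr1n.
rewrite [X in _ + X = _]addrC addrA; congr (_ + _).
rewrite big_distrr; apply: eq_bigr => i _ /=.
rewrite mulr_natl -mulrnA divnK //; apply: prime_dvd_bin => //.
by rewrite /= ltnS.
Qed.

Lemma frob_sum (T : comNzRingType) (S : subringClosed T) p (I : eqType)
    (r : seq I) (P : pred I) (F : I -> T) :
  prime p -> {in r, forall i, F i \in S} ->
  exists2 w, w \in S &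
    (\sum_(i <- r | P i) F i) ^+ p = \sum_(i <- r | P i) F i ^+ p + p%:R * w.
Proof.
move=> pp; elim: r => [|a r IH] Hr.
  exists 0; rewrite ?rpred0 // !big_nil mulr0 addr0 expr0n.
  by case: p pp.
have [w wS Hw] : exists2 w, w \in S &
    (\sum_(i <- r | P i) F i) ^+ p = \sum_(i <- r | P i) F i ^+ p + p%:R * w.
  by apply: IH => i ir; apply: Hr; rewrite inE ir orbT.
have sS : \sum_(i <- r | P i) F i \in S.
  by rewrite big_seq_cond rpred_sum // => i /andP[ir _]; apply: Hr; rewrite inE ir orbT.
rewrite !big_cons; case: (P a); last by exists w.
have aS : F a \in S by apply: Hr; rewrite inE eqxx.
have [w2 w2S H2] := frob2 pp aS sS.
exists (w + w2); first by rewrite rpredD.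
by rewrite H2 Hw mulrDr !addrA.
Qed.

Lemma digit_lt (Bs n : nat) (g : nat -> nat) : (0 < Bs)%N ->
  (forall i, (i < n)%N -> (g i < Bs)%N) ->
  (\sum_(j < n) g j * Bs ^ j < Bs ^ n)%N.
Proof.
move=> B0; elim: n g => [|n IH] g Hg; first by rewrite big_ord0 expn0.
rewrite big_ord_recl expn0 muln1.
have -> : (\sum_(i < n) g (bump 0 i) * Bs ^ bump 0 i =
           Bs * \sum_(i < n) g i.+1 * Bs ^ i)%N.
  by rewrite big_distrr; apply: eq_bigr => i _ /=; rewrite expnS mulnCA.
have H := IH (fun i => g i.+1) (fun i hi => Hg i.+1 hi).
have H0 := Hg 0%N (ltn0Sn _).
rewrite expnS; apply: (@leq_trans (Bs * (\sum_(i < n) g i.+1 * Bs ^ i).+1)).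
  by rewrite mulnS ltn_add2r.
by rewrite leq_mul2l H orbT.
Qed.

Lemma digit_gen (Bs n : nat) (g : nat -> nat) : (0 < Bs)%N ->
  (forall i, (i < n)%N -> (g i < Bs)%N) ->
  forall i, (i < n)%N -> ((\sum_(j < n) g j * Bs ^ j) %/ Bs ^ i %% Bs = g i)%N.
Proof.
move=> B0; elim: n g => [|n IH] g Hg i //.
rewrite big_ord_recl expn0 muln1.
have -> : (\sum_(i < n) g (bump 0 i) * Bs ^ bump 0 i =
           (\sum_(i < n) g i.+1 * Bs ^ i) * Bs)%N.
  by rewrite big_distrl; apply: eq_bigr => i0 _ /=; rewrite expnS mulnCA mulnC.
have H0 := Hg 0%N (ltn0Sn _).
case: i => [|i] hi.
  by rewrite expn0 divn1 addnC modnMDl modn_small.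
rewrite expnS divnMA addnC divnMDl // (divn_small H0) addn0.
exact: (IH (fun i => g i.+1) (fun i hi => Hg i.+1 hi) i hi).
Qed.

Section Kron.
Variables (K : numFieldType) (n Bs : nat).

Definition kap (e : mono n) : nat := (\sum_(i < n) tnth e i * Bs ^ i)%N.
Definition dig (k : nat) : mono n := [tuple ((k %/ Bs ^ i) %% Bs)%N | i < n].
Definition Wt (e : mono n) : K := ((\prod_(i < n) (tnth e i)`!)%N)%:R.
Definition Phi (s : mpoly K n) : {poly K} := \sum_(t <- s) t.2 *: 'X^(kap t.1).
Definition Lam (S0 : nat) (P : {poly K}) : K := \sum_(k < S0) P`_k * Wt (dig k).

Definition bnd (e : mono n) := forall i, (tnth e i < Bs)%N.

Lemma kap_nth e : kap e = (\sum_(i < n) nth 0%N e i * Bs ^ i)%N.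
Proof. by apply: eq_bigr => i _; rewrite (tnth_nth 0%N). Qed.

Lemma dig_kap e : (0 < Bs)%N -> bnd e -> dig (kap e) = e.
Proof.
move=> B0 be; apply: eq_from_tnth => i; rewrite tnth_mktuple kap_nth.
rewrite digit_gen // ?(tnth_nth 0%N) // => j jn.
by have := be (Ordinal jn); rewrite (tnth_nth 0%N).
Qed.

Lemma kap_lt e : (0 < Bs)%N -> bnd e -> (kap e < Bs ^ n)%N.
Proof.
move=> B0 be; rewrite kap_nth digit_lt // => j jn.
by have := be (Ordinal jn); rewrite (tnth_nth 0%N).
Qed.

Lemma kapM a b : kap (monoM a b) = (kap a + kap b)%N.
Proof.
rewrite /kap -big_split; apply: eq_bigr => i _ /=.
by rewrite tnth_mktuple mulnDl.
Qed.

Lemma kap0 : kap (mono0 n) = 0%N.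
Proof. by rewrite /kap big1 // => i _; rewrite tnth_mktuple. Qed.

Lemma PhiM p q : Phi (mpolyM p q) = Phi p * Phi q.
Proof.
rewrite /Phi /mpolyM big_allpairs_dep big_distrl; apply: eq_bigr => s _ /=.
rewrite big_distrr; apply: eq_bigr => t _ /=.
by rewrite kapM exprD -scalerAl -scalerAr scalerA.
Qed.

Lemma Phi1 : Phi (mpoly1 K n) = 1.
Proof. by rewrite /Phi big_cons big_nil addr0 /= kap0 expr0 scale1r. Qed.

Lemma PhiX f m : Phi (mpolyX f m) = Phi f ^+ m.
Proof.
elim: m => [|m IH]; first by rewrite expr0 Phi1.
by rewrite /mpolyX iterS -/(mpolyX f m) PhiM IH exprS.
Qed.

Lemma LamD S0 P Q : Lam S0 (P + Q) = Lam S0 P + Lam S0 Q.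
Proof. by rewrite /Lam -big_split; apply: eq_bigr => k _; rewrite coefD mulrDl. Qed.
Lemma LamZ S0 c P : Lam S0 (c *: P) = c * Lam S0 P.
Proof. by rewrite /Lam big_distrr; apply: eq_bigr => k _; rewrite coefZ -mulrA. Qed.
Lemma Lam0 S0 : Lam S0 0 = 0.
Proof. by rewrite /Lam big1 // => k _; rewrite coef0 mul0r. Qed.
Lemma Lam_sum S0 (I : Type) (r : seq I) (F : I -> {poly K}) :
  Lam S0 (\sum_(i <- r) F i) = \sum_(i <- r) Lam S0 (F i).
Proof.
elim: r => [|a r IH]; first by rewrite !big_nil Lam0.
by rewrite !big_cons LamD IH.
Qed.
Lemma LamXn S0 j : (j < S0)%N -> Lam S0 'X^j = Wt (dig j).
Proof.
move=> jS; rewrite /Lam (bigD1 (Ordinal jS)) //= coefXn eqxx mul1r.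
rewrite big1 ?addr0 // => k kj; rewrite coefXn.
have -> : (k == j :> nat) = false.
  by apply/negbTE; apply: contra kj => /eqP kj; apply/eqP/val_inj.
by rewrite mul0r.
Qed.

Lemma Lfun_Lam s : (0 < Bs)%N -> (forall t, t \in s -> bnd t.1) ->
  Lfun s = Lam (Bs ^ n) (Phi s).
Proof.
move=> B0 Hs; rewrite /Phi Lam_sum /Lfun big_seq [RHS]big_seq.
apply: eq_bigr => t ts; rewrite LamZ LamXn ?dig_kap ?kap_lt //; exact: Hs.
Qed.

End Kron.

Section Main.
Variables (K : numFieldType) (n : nat).

Lemma mpolyX_bnd (f : mpoly K n) E m :
  (forall t, t \in f -> forall i, (tnth t.1 i <= E)%N) ->
  forall t, t \in mpolyX f m -> forall i, (tnth t.1 i <= m * E)%N.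
Proof.
move=> Hf; elim: m => [|m IH] t.
  by rewrite /mpolyX /= inE => /eqP -> i; rewrite tnth_mktuple.
rewrite /mpolyX iterS -/(mpolyX f m) /mpolyM => /allpairsP [[s u] [/= sf um ->]] i /=.
by rewrite tnth_mktuple mulSn leq_add ?Hf ?IH.
Qed.

Lemma dvd_Wt (e : mono n) p : prime p -> e != mono0 n ->
  (p %| \prod_(i < n) (tnth e i * p)`!)%N.
Proof.
move=> pp ne.
have [i ei] : exists i, tnth e i != 0%N.
  apply/existsP; apply: contraR ne => /existsPn H; apply/eqP.
  by apply: eq_from_tnth => i; rewrite tnth_mktuple; apply/eqP; move: (H i); case: eqP.
rewrite (bigD1 i) //= dvdn_mulr // dvdn_fact // prime_gt0 //=.
by rewrite leq_pmull // lt0n.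
Qed.

Lemma frob_main (S : subringClosed K) (f : mpoly K n) p :
  prime p -> (forall t, t \in f -> t.2 \in S) ->
  exists2 w, w \in S & Lfun (mpolyX f p) = const_term f ^+ p + p%:R * w.
Proof.
move=> pp fS.
set E := (\max_(t <- f) \max_(i < n) tnth t.1 i)%N.
have HE : forall t, t \in f -> forall i, (tnth t.1 i <= E)%N.
  move=> t tf i.
  apply: (leq_trans _ (@leq_bigmax_seq _ f xpredT (fun t : mono n * K => \max_(i < n) tnth t.1 i) t tf isT)).
  exact: (@leq_bigmax _ (fun j : 'I_n => tnth t.1 j) i).
set Bs := (p * E).+1.
have B0 : (0 < Bs)%N by [].
set S0 := (Bs ^ n)%N.
have bndp : forall t, t \in mpolyX f p -> bnd Bs t.1.
  move=> t tf i; rewrite /Bs ltnS; exact: mpolyX_bnd HE _ tf i.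
rewrite (Lfun_Lam B0 bndp) PhiX.
have [G GS HG] := frob_sum predT pp (S := GRing.SubringClosed.clone _ (polyOver_pred S) _)
    (r := f) (F := fun t => t.2 *: 'X^(kap Bs t.1)) (fun t tf =>
    polyOverZ (fS t tf) (polyOverXn _ _)).
rewrite /Phi HG LamD -polyC_natr mul_polyC LamZ Lam_sum.
have LG : Lam n Bs S0 G \in S.
  rewrite rpred_sum // => k _; rewrite rpredM ?rpred_nat //; exact: (polyOverP GS).
have Hterm : forall t : mono n * K, t \in f ->
    Lam n Bs S0 ((t.2 *: 'X^(kap Bs t.1)) ^+ p) =
    t.2 ^+ p * ((\prod_(i < n) (tnth t.1 i * p)`!)%N)%:R.
  move=> t tf; rewrite exprZn -exprM LamZ; congr (_ * _).
  set es := [tuple (tnth t.1 i * p)%N | i < n] : mono n.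
  have kes : (kap Bs t.1 * p)%N = kap Bs es.
    by rewrite /kap big_distrl; apply: eq_bigr => i _ /=; rewrite tnth_mktuple mulnAC.
  have bes : bnd Bs es.
    move=> i; rewrite tnth_mktuple /Bs ltnS mulnC leq_mul2l HE ?orbT //.
  rewrite kes LamXn ?kap_lt // dig_kap // /Wt; congr (_ %:R).
  by apply: eq_bigr => i _; rewrite tnth_mktuple.
rewrite big_seq (eq_bigr _ (fun t tf => Hterm t tf)) -big_seq.
rewrite (bigID (fun t : mono n * K => t.1 == mono0 n)) /=.
set P0 := (fun t : mono n * K => t.1 == mono0 n).
have [w1 w1S Hw1] := frob_sum P0 pp (S := S) (r := f) (F := fun t => t.2) fS.
have H1 : \sum_(t <- f | t.1 == mono0 n)
            t.2 ^+ p * ((\prod_(i < n) (tnth t.1 i * p)`!)%N)%:R =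
          const_term f ^+ p - p%:R * w1.
  rewrite /const_term Hw1 addrK; apply: eq_bigr => t /eqP ->.
  by rewrite big1 ?mulr1 // => i _; rewrite tnth_mktuple mul0n.
have H2 : \sum_(t <- f | t.1 != mono0 n)
            t.2 ^+ p * ((\prod_(i < n) (tnth t.1 i * p)`!)%N)%:R =
          p%:R * \sum_(t <- f | t.1 != mono0 n)
            t.2 ^+ p * ((\prod_(i < n) (tnth t.1 i * p)`!) %/ p)%N%:R.
  rewrite big_distrr; apply: eq_bigr => t ne /=.
  by rewrite mulrCA -natrM mulnC divnK // dvd_Wt.
rewrite H1 H2.
exists (- w1 + \sum_(t <- f | t.1 != mono0 n)
            t.2 ^+ p * ((\prod_(i < n) (tnth t.1 i * p)`!) %/ p)%N%:R + Lam n Bs S0 G).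
  rewrite !rpredD ?rpredN // big_seq_cond rpred_sum // => t /andP[tf _].
  by rewrite rpredM ?rpredX ?rpred_nat ?fS.
by rewrite !mulrDr mulrN !addrA.
Qed.

End Main.

Lemma gen_mem (K : numFieldType) (ys : seq K) y : y \in ys -> y \in gen ys.
Proof.
elim: ys => [|y0 ys IH] //; rewrite inE gen_cons => /orP[/eqP -> | yy].
  exact: adj_gen.
by apply: adj_sub; apply: IH.
Qed.

Unset Implicit Arguments.
Set Strict Implicit.

Theorem proposition4p8 (R : numClosedFieldType) (n : nat) (f : mpoly R n) :
  const_term f != 0 ->
  exists m : nat, (1 <= m)%N /\ Lfun (mpolyX f m) != 0.
Proof.
move=> cnz.
have fB : forall t, t \in f -> t.2 \in gen [seq t.2 | t <- f].
  by move=> t tf; apply: gen_mem; apply: map_f.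
have cB : const_term f \in gen [seq t.2 | t <- f].
  by rewrite /const_term big_seq_cond rpred_sum // => t /andP[tf _]; apply: fB.
have [N HN] := gen_pfree cB cnz.
case: (prime_above N) => p Np pp.
exists p; split; first exact: prime_gt0.
apply/negP => /eqP L0.
have [w wB Hw] := frob_main pp fB.
have wB' : - w \in gen [seq t.2 | t <- f] by rewrite rpredN.
move: (HN p pp Np p (- w) wB').
have -> : const_term f ^+ p = p%:R * - w.
  by rewrite mulrN; apply/eqP; rewrite -addr_eq0 -Hw L0.
by rewrite eqxx.
Qed.
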